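(* Let $\rho,\sigma,\gamma$ be qubit density matrices written in the energy eigenbasis as $\rho=\begin{pmatrix} r & a \\ \bar{a} & 1-r\end{pmatrix}$, $\sigma=\begin{pmatrix} s & b \\ \bar{b} & 1-s\end{pmatrix}$, $\gamma=\begin{pmatrix} g & 0 \\ 0 & 1-g\end{pmatrix}$, with diagonal vectors $\mathbf{r}=(r,1-r)^T$, $\mathbf{s}=(s,1-s)^T$, $\mathbf{g}=(g,1-g)^T$, and suppose $a\neq 0$ and $g\neq\frac12$. Then, for $\mathbf{r}\neq \mathbf{g}$, $(\rho,\gamma)\xrightarrow{{\rm GPC}}(\sigma,\gamma)$ if and only if $(\mathbf{r},\mathbf{g})\succ (\mathbf{s},\mathbf{g})$ and \[ \frac{|b|^2}{|a|^2}\leq\frac{\det\begin{pmatrix} s & 1-r \\ g & 1-g\end{pmatrix}\det\begin{pmatrix} r & 1-s \\ g & 1-g\end{pmatrix}}{\left(r-g\right)^2}. \] For $\mathbf{r}=\mathbf{g}$, $(\rho,\gamma)\xrightarrow{{\rm GPC}}(\sigma,\gamma)$ if and only if $\mathbf{s}=\mathbf{g}$ and $|a|\geq |b|$.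
   Context: Setting: a qubit system $A$ with a well-defined (non-degenerate) Hamiltonian $H^A$ and inverse temperature $\beta$; $\gamma=e^{-\beta H^A}/{\rm Tr}[e^{-\beta H^A}]$ is the Gibbs state, diagonal in the energy eigenbasis $\{|0\rangle,|1\rangle\}$. An athermality state is a pair $(\rho,\gamma)$. ${\rm GPC}$ denotes the set of Gibbs-preserving covariant channels: quantum channels $\mathcal{E}$ with $\mathcal{E}(\gamma)=\gamma$ that are time-translation covariant, i.e. $\mathcal{E}(e^{-iH^At}\rho e^{iH^At})=e^{-iH^At}\mathcal{E}(\rho)e^{iH^At}$ for all $t\in\mathbb{R}$. The notation $(\rho,\gamma)\xrightarrow{{\rm GPC}}(\sigma,\gamma)$ means there exists $\mathcal{E}\in{\rm GPC}$ with $\mathcal{E}(\rho)=\sigma$. Relative majorization $(\mathbf{r},\mathbf{g})\succ(\mathbf{s},\mathbf{g})$ means there exists a column stochastic matrix $E$ with $E\mathbf{r}=\mathbf{s}$ and $E\mathbf{g}=\mathbf{g}$. (The cases $a=0$ or $g=\frac12$ reduce to the quasi-classical regime and are excluded.) *)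

(* Defs.v *)
From mathcomp Require Import all_boot all_order all_algebra.
From mathcomp Require Import reals sequences exp trigo.
From mathcomp Require Import complex.
Set Implicit Arguments. Unset Strict Implicit. Unset Printing Implicit Defensive.
Import Order.TTheory GRing.Theory Num.Theory.
Local Open Scope ring_scope.
Local Open Scope complex_scope.

Section QubitDefs.
Variable R : realType.
Local Notation C := R[i].

Definition adj m n (A : 'M[C]_(m, n)) : 'M[C]_(n, m) := \matrix_(i, j) (A j i)^*.

Definition psd n (X : 'M[C]_n) : Prop :=
  forall v : 'cV[C]_n, 0 <= (adj v *m X *m v) 0 0.

Definition density (X : 'M[C]_2) : Prop := psd X /\ \tr X = 1.

Definition qmat (p : R) (c : C) : 'M[C]_2 :=
  \matrix_(i < 2, j < 2)
    match val i, val j with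
    | 0%N, 0%N => p%:C
    | 0%N, _ => c
    | _, 0%N => c^*
    | _, _ => (1 - p)%:C
    end.

Definition vec2 (x : R) : 'cV[R]_2 :=
  \col_(i < 2) (if val i == 0%N then x else 1 - x).

(* Hamiltonian H^A = diag(E0, E1); Gibbs state gamma = e^{-beta H}/Tr e^{-beta H}
   = diag(g, 1-g) with g below *)
Definition gibbs_g (beta E0 E1 : R) : R :=
  expR (- beta * E0) / (expR (- beta * E0) + expR (- beta * E1)).

Definition gibbs (beta E0 E1 : R) : 'M[C]_2 := qmat (gibbs_g beta E0 E1) 0.

Definition expi (x : R) : C := Complex (cos x) (sin x).

Definition evol (E0 E1 t : R) : 'M[C]_2 :=
  \matrix_(i < 2, j < 2)
    if i == j then expi (- (if val i == 0%N then E0 else E1) * t) else 0.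

(* Complete positivity: for every n, id_n (x) E is positive; an operator on
   C^n (x) C^2 is written as the n x n block family X i j of 2x2 blocks. *)
Definition linear_map (E : 'M[C]_2 -> 'M[C]_2) : Prop :=
  forall (c : C) (X Y : 'M[C]_2), E (c *: X + Y) = c *: E X + E Y.

Definition trace_preserving (E : 'M[C]_2 -> 'M[C]_2) : Prop :=
  forall X, \tr (E X) = \tr X.

Definition block_psd n (X : 'I_n -> 'I_n -> 'M[C]_2) : Prop :=
  forall v : 'I_n -> 'cV[C]_2,
    0 <= \sum_(i < n) \sum_(j < n) (adj (v i) *m X i j *m v j) 0 0.

Definition completely_positive (E : 'M[C]_2 -> 'M[C]_2) : Prop :=
  forall (n : nat) (X : 'I_n -> 'I_n -> 'M[C]_2),
    block_psd X -> block_psd (fun i j => E (X i j)).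

Definition channel (E : 'M[C]_2 -> 'M[C]_2) : Prop :=
  [/\ linear_map E, trace_preserving E & completely_positive E].

Definition time_covariant (E0 E1 : R) (E : 'M[C]_2 -> 'M[C]_2) : Prop :=
  forall (t : R) (X : 'M[C]_2),
    E (evol E0 E1 t *m X *m adj (evol E0 E1 t))
    = evol E0 E1 t *m E X *m adj (evol E0 E1 t).

Definition GPC (beta E0 E1 : R) (E : 'M[C]_2 -> 'M[C]_2) : Prop :=
  [/\ channel E, E (gibbs beta E0 E1) = gibbs beta E0 E1 & time_covariant E0 E1 E].

Definition GPC_convertible (beta E0 E1 : R) (rho sigma : 'M[C]_2) : Prop :=
  exists E, GPC beta E0 E1 E /\ E rho = sigma.

Definition col_stochastic (M : 'M[R]_2) : Prop :=
  (forall i j, 0 <= M i j) /\ (forall j, \sum_(i < 2) M i j = 1).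

Definition rel_maj (r s g : 'cV[R]_2) : Prop :=
  exists M : 'M[R]_2, col_stochastic M /\ M *m r = s /\ M *m g = g.

End QubitDefs.

(* Main.v *)
Require Import Defs.
From mathcomp Require Import all_boot all_order all_algebra.
From mathcomp Require Import reals sequences exp trigo.
From mathcomp Require Import complex.
From mathcomp Require Import ring lra.
Import Order.TTheory GRing.Theory Num.Theory.
Local Open Scope ring_scope.
Local Open Scope complex_scope.

Set Implicit Arguments. Unset Strict Implicit. Unset Printing Implicit Defensive.
Section S.
Variable R : realType.
Local Notation C := R[i].
Local Notation i0 := (@ord0 1).
Local Notation i1 := (@ord_max 1).

Lemma sum2 (V : nmodType) (F : 'I_2 -> V) : \sum_(i < 2) F i = F i0 + F i1.
Proof. rewrite big_ord_recr big_ord1 /=. congr (F _ + _). exact: val_inj. Qed.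

Lemma ord2 (i : 'I_2) : i = i0 \/ i = i1.
Proof. by case: i => [[|[|//]] Hi]; [left|right]; apply: val_inj. Qed.

Lemma mx2_eq (A B : 'M[C]_2) : A i0 i0 = B i0 i0 -> A i0 i1 = B i0 i1 ->
  A i1 i0 = B i1 i0 -> A i1 i1 = B i1 i1 -> A = B.
Proof.
move=> h1 h2 h3 h4; apply/matrixP=> i j.
by case: (ord2 i) => ->; case: (ord2 j) => ->.
Qed.

Lemma e00 : (i0 == i0) = true. Proof. by []. Qed.
Lemma e11 : (i1 == i1) = true. Proof. by []. Qed.
Lemma i01 : (i0 == i1) = false. Proof. by []. Qed.
Lemma i10 : (i1 == i0) = false. Proof. by []. Qed.

Lemma vi1 : (val i1 == 0%N) = false. Proof. by []. Qed.
Lemma cj0 : conjc (0 : C) = 0.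
Proof. by apply/eqP; rewrite eq_complex /= oppr0 !eqxx. Qed.

Lemma qf (u w : 'cV[C]_2) (Y : 'M[C]_2) : (adj u *m Y *m w) 0 0 =
  (conjc (u i0 0)) * (Y i0 i0 * w i0 0 + Y i0 i1 * w i1 0) +
  (conjc (u i1 0)) * (Y i1 i0 * w i0 0 + Y i1 i1 * w i1 0).
Proof. rewrite !mxE !sum2 !mxE !sum2 !mxE. ring. Qed.

Lemma qmatE (p : R) (c : C) : [/\ qmat p c i0 i0 = p%:C, qmat p c i0 i1 = c,
   qmat p c i1 i0 = conjc c & qmat p c i1 i1 = (1 - p)%:C].
Proof. by rewrite !mxE. Qed.


Lemma expiMJ (x y : R) : expi x * (conjc (expi y)) = expi (x - y).
Proof. rewrite /expi; simpc. rewrite cosB sinB. congr Complex; ring. Qed.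

Lemma expi0 : expi 0 = 1 :> C.
Proof. by rewrite /expi cos0 sin0. Qed.

Lemma conj_expi (x : R) : conjc (expi x) = expi (- x).
Proof. by rewrite /expi cosN sinN. Qed.

Definition phf (w : C) (i j : 'I_2) : C :=
  if i == j then 1 else if i == i0 then w else conjc w.

Definition phmx (w : C) (X : 'M[C]_2) : 'M[C]_2 :=
  \matrix_(i, j) (phf w i j * X i j).

Lemma evolE (E0 E1 t : R) (X : 'M[C]_2) :
  evol E0 E1 t *m X *m adj (evol E0 E1 t) = phmx (expi ((E1 - E0) * t)) X.
Proof.
have h1 : forall x : R, expi x * conjc (expi x) = 1 by move=> x; rewrite expiMJ subrr expi0.
have h2 : expi (- E0 * t) * conjc (expi (- E1 * t)) = expi ((E1 - E0) * t).
  by rewrite expiMJ; congr expi; ring.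
have h3 : expi (- E1 * t) * conjc (expi (- E0 * t)) = conjc (expi ((E1 - E0) * t)).
  by rewrite expiMJ conj_expi; congr expi; ring.
apply: mx2_eq; rewrite /phmx /phf !mxE !sum2 !mxE !sum2 !mxE !eqxx ?i01 ?i10 ?vi1 !cj0 !mul0r !mulr0 ?addr0 ?add0r ?mul1r.
- by rewrite mulrAC h1 mul1r.
- by rewrite mulrAC h2.
- by rewrite mulrAC h3.
- by rewrite mulrAC h1 mul1r.
Qed.


Lemma phmxij w X i j : phmx w X i j = phf w i j * X i j. Proof. by rewrite mxE. Qed.

Lemma phase_i (E0 E1 : R) : E0 != E1 -> expi ((E1 - E0) * ((pi / 2) / (E1 - E0))) = 'i.
Proof.
move=> h; have h' : E1 - E0 != 0 by rewrite subr_eq0 eq_sym.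
by rewrite mulrC divfK // /expi cos_pihalf sin_pihalf.
Qed.

Lemma cov_phmx (E0 E1 : R) (E : 'M[C]_2 -> 'M[C]_2) : time_covariant E0 E1 E ->
  forall t X, E (phmx (expi ((E1 - E0) * t)) X) = phmx (expi ((E1 - E0) * t)) (E X).
Proof. by move=> hc t X; rewrite -!evolE hc. Qed.

Lemma linE (E : 'M[C]_2 -> 'M[C]_2) : linear_map E ->
  [/\ E 0 = 0, forall X Y, E (X + Y) = E X + E Y & forall (k : C) X, E (k *: X) = k *: E X].
Proof.
move=> hl.
have h0 : E 0 = 0.
  have := hl 1 0 0; rewrite !scale1r addr0 => h.
  have : E 0 + E 0 - E 0 = E 0 - E 0 by rewrite -h.
  by rewrite addrK subrr.
split=> //.
- by move=> X Y; have := hl 1 X Y; rewrite !scale1r.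
- by move=> k X; have := hl k X 0; rewrite !addr0 h0 addr0.
Qed.

Lemma phmx_delta (w : C) (k l : 'I_2) : phmx w (delta_mx k l) = phf w k l *: delta_mx k l.
Proof.
apply/matrixP => i j; rewrite !mxE.
case hik: (i == k); case hjl: (j == l); rewrite /= ?mulr0 //.
by move/eqP: hik => ->; move/eqP: hjl => ->.
Qed.

Lemma cov_zero (E0 E1 : R) (E : 'M[C]_2 -> 'M[C]_2) : E0 != E1 -> linear_map E ->
  time_covariant E0 E1 E ->
  forall k l i j, phf 'i k l != phf 'i i j -> E (delta_mx k l) i j = 0.
Proof.
move=> hE hl hc k l i j hne.
have := cov_phmx hc ((pi / 2) / (E1 - E0)) (delta_mx k l).
rewrite phase_i // phmx_delta.
case: (linE hl) => _ _ ->.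
move=> /matrixP /(_ i j); rewrite !mxE => h.
apply/eqP; move: h => /eqP; rewrite -subr_eq0 -mulrBl mulf_eq0 subr_eq0 (negbTE hne) /=.
done.
Qed.


Lemma cjD (x y : C) : conjc (x + y) = conjc x + conjc y. Proof. exact: rmorphD. Qed.
Lemma cjM (x y : C) : conjc (x * y) = conjc x * conjc y. Proof. exact: rmorphM. Qed.
Lemma cjN (x : C) : conjc (- x) = - conjc x. Proof. exact: rmorphN. Qed.
Lemma cjR (x : R) : conjc (x%:C) = x%:C. Proof. exact: conjc_real. Qed.
Lemma cjK (x : C) : conjc (conjc x) = x. Proof. by case: x => a b; rewrite /conjc opprK. Qed.
Lemma cji : conjc 'i = - 'i :> C.
Proof. by apply/eqP; rewrite eq_complex /= oppr0 !eqxx. Qed.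

Definition cv2 (x y : C) : 'cV[C]_2 := \col_(i < 2) (if i == i0 then x else y).
Lemma cv2E (x y : C) : cv2 x y i0 0 = x /\ cv2 x y i1 0 = y.
Proof. by rewrite !mxE. Qed.

Definition Qf n (X : 'I_n -> 'I_n -> 'M[C]_2) (v : 'I_n -> 'cV[C]_2) : C :=
  \sum_(i < n) \sum_(j < n) (adj (v i) *m X i j *m v j) 0 0.

Definition Emap (p00 p01 p10 p11 : R) (c : C) (X : 'M[C]_2) : 'M[C]_2 :=
  \matrix_(i, j) (if i == i0 then
                    (if j == i0 then p00%:C * X i0 i0 + p01%:C * X i1 i1 else c * X i0 i1)
                  else
                    (if j == i0 then conjc c * X i1 i0 else p10%:C * X i0 i0 + p11%:C * X i1 i1)).

Lemma EmapE p00 p01 p10 p11 c X :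
  [/\ Emap p00 p01 p10 p11 c X i0 i0 = p00%:C * X i0 i0 + p01%:C * X i1 i1,
      Emap p00 p01 p10 p11 c X i0 i1 = c * X i0 i1,
      Emap p00 p01 p10 p11 c X i1 i0 = conjc c * X i1 i0 &
      Emap p00 p01 p10 p11 c X i1 i1 = p10%:C * X i0 i0 + p11%:C * X i1 i1].
Proof. by rewrite !mxE. Qed.

Lemma Emap_lin p00 p01 p10 p11 c : linear_map (Emap p00 p01 p10 p11 c).
Proof.
move=> k X Y; apply: mx2_eq; rewrite !mxE /=; ring.
Qed.


Section EmapS.
Variables (p00 p01 p10 p11 : R) (c : C).
Local Notation F := (Emap p00 p01 p10 p11 c).
Lemma Em00 X : F X i0 i0 = p00%:C * X i0 i0 + p01%:C * X i1 i1. Proof. by rewrite mxE. Qed.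
Lemma Em01 X : F X i0 i1 = c * X i0 i1. Proof. by rewrite mxE. Qed.
Lemma Em10 X : F X i1 i0 = conjc c * X i1 i0. Proof. by rewrite mxE. Qed.
Lemma Em11 X : F X i1 i1 = p10%:C * X i0 i0 + p11%:C * X i1 i1. Proof. by rewrite mxE. Qed.

Lemma Emap_tp : p00 + p10 = 1 -> p01 + p11 = 1 -> trace_preserving F.
Proof.
move=> h1 h2 X; rewrite /mxtrace !sum2 Em00 Em11.
have e1 : p00%:C + p10%:C = 1 by rewrite -rmorphD h1.
have e2 : p01%:C + p11%:C = 1 by rewrite -rmorphD h2.
transitivity ((p00%:C + p10%:C) * X i0 i0 + (p01%:C + p11%:C) * X i1 i1); first ring.
by rewrite e1 e2 !mul1r.
Qed.

Lemma Emap_cov E0 E1 : time_covariant E0 E1 F.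
Proof.
move=> t X; rewrite !evolE; set w := expi _.
apply: mx2_eq; rewrite ?Em00 ?Em01 ?Em10 ?Em11 !phmxij ?Em00 ?Em01 ?Em10 ?Em11 /phf ?e00 ?e11 ?i01 ?i10; ring.
Qed.

End EmapS.


Lemma cv0 (x y : C) : cv2 x y i0 0 = x. Proof. by rewrite mxE. Qed.
Lemma cv1 (x y : C) : cv2 x y i1 0 = y. Proof. by rewrite mxE. Qed.
Lemma rcM (a b : R) : (a * b)%:C = a%:C * b%:C :> C. Proof. exact: rmorphM. Qed.
Lemma rcD (a b : R) : (a + b)%:C = a%:C + b%:C :> C. Proof. exact: rmorphD. Qed.
Lemma rcB (a b : R) : (a - b)%:C = a%:C - b%:C :> C. Proof. exact: rmorphB. Qed.

Lemma Emap_id1 p00 p01 p10 p11 c n (X : 'I_n -> 'I_n -> 'M[C]_2) (v : 'I_n -> 'cV[C]_2) :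
  let x i := v i i0 0 in let y i := v i i1 0 in
  p00%:C * Qf (fun i j => Emap p00 p01 p10 p11 c (X i j)) v =
  p00%:C * p01%:C * Qf X (fun i => cv2 0 (x i)) +
  p00%:C * p10%:C * Qf X (fun i => cv2 (y i) 0) +
  Qf X (fun i => cv2 (p00%:C * x i) (c * y i)) +
  (p00%:C * p11%:C - c * conjc c) * Qf X (fun i => cv2 0 (y i)).
Proof.
move=> x y; rewrite /Qf !mulr_sumr -!big_split; apply: eq_bigr => i _.
rewrite !mulr_sumr -!big_split; apply: eq_bigr => j _.
rewrite !qf Em00 Em01 Em10 Em11 !cv0 !cv1 !cj0 !cjM cjR /x /y /=; ring.
Qed.

Lemma Emap_id2 p01 p10 p11 n (X : 'I_n -> 'I_n -> 'M[C]_2) (v : 'I_n -> 'cV[C]_2) :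
  let x i := v i i0 0 in let y i := v i i1 0 in
  Qf (fun i j => Emap 0 p01 p10 p11 0 (X i j)) v =
  p01%:C * Qf X (fun i => cv2 0 (x i)) +
  p10%:C * Qf X (fun i => cv2 (y i) 0) +
  p11%:C * Qf X (fun i => cv2 0 (y i)).
Proof.
move=> x y; rewrite /Qf !mulr_sumr -!big_split; apply: eq_bigr => i _.
rewrite !mulr_sumr -!big_split; apply: eq_bigr => j _.
rewrite !qf Em00 Em01 Em10 Em11 !cv0 !cv1 !cj0 /x /y /=; ring.
Qed.


Lemma normc2 (z : C) : ((Normc.normc z) ^+ 2)%:C = z * conjc z.
Proof.
case: z => a b; rewrite /Normc.normc sqr_sqrtr ?addr_ge0 ?sqr_ge0 //.
by apply/eqP; rewrite eq_complex /=; apply/andP; split; apply/eqP; ring.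
Qed.

Lemma Emap_cp p00 p01 p10 p11 c : 0 <= p00 -> 0 <= p01 -> 0 <= p10 -> 0 <= p11 ->
  Normc.normc c ^+ 2 <= p00 * p11 -> completely_positive (Emap p00 p01 p10 p11 c).
Proof.
move=> h0 h1 h2 h3 hc n X hX v.
change (0 <= Qf (fun i j => Emap p00 p01 p10 p11 c (X i j)) v).
have hQ : forall u, 0 <= Qf X u := hX.
case: (eqVneq p00 0) => [e|ne].
- subst p00.
  have c0 : c = 0.
    rewrite mul0r in hc.
    have h : Normc.normc c ^+ 2 = 0 by apply/eqP; rewrite eq_le hc sqr_ge0.
    by apply: Normc.eq0_normc; apply/eqP; move: h => /eqP; rewrite expf_eq0 /=.
  subst c; rewrite Emap_id2.
  by rewrite !addr_ge0 // mulr_ge0 // ler0c.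
- have hp : 0 < p00%:C by rewrite ltcR lt_def ne h0.
  rewrite -(pmulr_rge0 _ hp) Emap_id1.
  have e : p00%:C * p11%:C - c * conjc c = (p00 * p11 - Normc.normc c ^+ 2)%:C.
    by rewrite rcB rcM normc2.
  rewrite e -!rcM.
  by rewrite !addr_ge0 // mulr_ge0 // ler0c ?mulr_ge0 // subr_ge0.
Qed.


Lemma delta_ij (i j k l : 'I_2) : (delta_mx i j : 'M[C]_2) k l = ((i == k) && (j == l))%:R.
Proof. by rewrite mxE eq_sym [j == l]eq_sym. Qed.

Lemma choi_psd : block_psd (fun i j : 'I_2 => (delta_mx i j : 'M[C]_2)).
Proof.
move=> v; rewrite !sum2 !qf !delta_ij ?e00 ?e11 ?i01 ?i10 /=.
set a := v i0 i0 0; set b := v i1 i1 0.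
apply: le_trans (mulcJ_ge0 (a + b)) _.
rewrite le_eqVlt; apply/orP; left; apply/eqP.
rewrite cjD /a /b; ring.
Qed.

Lemma mx_decomp (X : 'M[C]_2) : X = X i0 i0 *: delta_mx i0 i0 + X i0 i1 *: delta_mx i0 i1
   + X i1 i0 *: delta_mx i1 i0 + X i1 i1 *: delta_mx i1 i1.
Proof. apply: mx2_eq; rewrite !mxE /=; ring. Qed.

Lemma one_ne_i : (1 : C) != 'i.
Proof. by apply/negP => /eqP /(congr1 (@complex.Im R)) /= /eqP; rewrite eq_sym oner_eq0. Qed.
Lemma one_ne_mi : (1 : C) != - 'i.
Proof. apply/negP => /eqP /(congr1 (@complex.Im R)) /= h; lra. Qed.
Lemma i_ne_mi : 'i != - 'i :> C.
Proof. apply/negP => /eqP /(congr1 (@complex.Im R)) /= h; lra. Qed.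


Lemma ge0_real (z : C) : 0 <= z -> z = (complex.Re z)%:C.
Proof. case: z => a b; rewrite lecE /= => /andP [/eqP hb _]. by rewrite hb. Qed.

Lemma cj1 : conjc (1 : C) = 1.
Proof. by apply/eqP; rewrite eq_complex /= oppr0 !eqxx. Qed.
Lemma cjii : conjc 'i * 'i = 1 :> C.
Proof. by apply/eqP; rewrite eq_complex /=; apply/andP; split; apply/eqP; ring. Qed.

Lemma herm_lemma (p q : R) (c d : C) : 0 <= p%:C + q%:C + c + d ->
  0 <= p%:C + q%:C + c * 'i + conjc 'i * d -> d = conjc c.
Proof.
case: c => ca cb; case: d => da db; rewrite !lecE /=.
move=> /andP [/eqP h1 _] /andP [/eqP h2 _].
have ea : da = ca by lra.
have eb : db = - cb by lra.
by rewrite ea eb.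
Qed.

Definition v2 (a b : 'cV[C]_2) (i : 'I_2) := if i == i0 then a else b.
Lemma v20 a b : v2 a b i0 = a. Proof. by []. Qed.
Lemma v21 a b : v2 a b i1 = b. Proof. by []. Qed.

Ltac phfne := rewrite /phf ?e00 ?e11 ?i01 ?i10 ?cji;
  first [exact: one_ne_i | exact: one_ne_mi | exact: i_ne_mi |
         rewrite eq_sym; first [exact: one_ne_i | exact: one_ne_mi | exact: i_ne_mi]].

Lemma scaleE (k : C) (A : 'M[C]_2) i j : (k *: A) i j = k * A i j. Proof. by rewrite mxE. Qed.
Lemma addE (A B : 'M[C]_2) i j : (A + B) i j = A i j + B i j. Proof. by rewrite mxE. Qed.

Lemma quad_lemma (p q n : R) : 0 <= p -> 0 <= q -> 0 <= n ->
  (forall t, 0 <= p + t * t * n * q - (t * n + t * n)) -> n <= p * q.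
Proof.
move=> hp hq hn hs.
case: (eqVneq n 0) => [->|nn]; first by rewrite mulr_ge0.
case: (eqVneq q 0) => [eq|nq].
- have := hs ((p + 1) / n); rewrite eq.
  have -> : p + (p + 1) / n * ((p + 1) / n) * n * 0 - ((p + 1) / n * n + (p + 1) / n * n)
     = p - 2 * (p + 1) by field.
  move=> h; lra.
- have qp : 0 < q by rewrite lt_def nq hq.
  have := hs (q^-1).
  have -> : p + q^-1 * q^-1 * n * q - (q^-1 * n + q^-1 * n) = p - n / q by field.
  by rewrite subr_ge0 ler_pdivrMr.
Qed.

Lemma gpc_forward (E0 E1 : R) (E : 'M[C]_2 -> 'M[C]_2) : E0 != E1 -> channel E ->
  time_covariant E0 E1 E ->
  exists p00 p01 p10 p11 (c : C),
   [/\ [/\ 0 <= p00, 0 <= p01, 0 <= p10 & 0 <= p11], p00 + p10 = 1, p01 + p11 = 1,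
       Normc.normc c ^+ 2 <= p00 * p11 & forall X, E X = Emap p00 p01 p10 p11 c X].
Proof.
move=> hE [hl htp hcp] hc.
have Z := cov_zero hE hl hc.
have z1 : E (delta_mx i0 i0) i0 i1 = 0 by apply: Z; phfne.
have z2 : E (delta_mx i0 i0) i1 i0 = 0 by apply: Z; phfne.
have z3 : E (delta_mx i1 i1) i0 i1 = 0 by apply: Z; phfne.
have z4 : E (delta_mx i1 i1) i1 i0 = 0 by apply: Z; phfne.
have z5 : E (delta_mx i0 i1) i0 i0 = 0 by apply: Z; phfne.
have z6 : E (delta_mx i0 i1) i1 i1 = 0 by apply: Z; phfne.
have z7 : E (delta_mx i0 i1) i1 i0 = 0 by apply: Z; phfne.
have z8 : E (delta_mx i1 i0) i0 i0 = 0 by apply: Z; phfne.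
have z9 : E (delta_mx i1 i0) i1 i1 = 0 by apply: Z; phfne.
have z10 : E (delta_mx i1 i0) i0 i1 = 0 by apply: Z; phfne.
have hch := hcp 2 _ choi_psd.
set P00 := E (delta_mx i0 i0) i0 i0.
set P10 := E (delta_mx i0 i0) i1 i1.
set P01 := E (delta_mx i1 i1) i0 i0.
set P11 := E (delta_mx i1 i1) i1 i1.
set c := E (delta_mx i0 i1) i0 i1.
set d := E (delta_mx i1 i0) i1 i0.
have hq : forall x0 y0 x1 y1, 0 <= conjc x0 * P00 * x0 + conjc y0 * P10 * y0 +
    conjc x1 * P01 * x1 + conjc y1 * P11 * y1 + conjc x0 * c * y1 + conjc y1 * d * x0.
  move=> x0 y0 x1 y1; have := hch (v2 (cv2 x0 y0) (cv2 x1 y1)).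
  cbv beta; rewrite !sum2 !qf !v20 !v21 !cv0 !cv1 z1 z2 z3 z4 z5 z6 z7 z8 z9 z10.
  by move=> h; apply: (le_trans h); rewrite le_eqVlt; apply/orP; left; apply/eqP;
    rewrite /P00 /P10 /P01 /P11 /c /d; ring.
have hP00 : 0 <= P00.
  by have := hq 1 0 0 0; rewrite !cj0 cj1 => h; apply: (le_trans h); rewrite le_eqVlt; apply/orP; left; apply/eqP; ring.
have hP10 : 0 <= P10.
  by have := hq 0 1 0 0; rewrite !cj0 cj1 => h; apply: (le_trans h); rewrite le_eqVlt; apply/orP; left; apply/eqP; ring.
have hP01 : 0 <= P01.
  by have := hq 0 0 1 0; rewrite !cj0 cj1 => h; apply: (le_trans h); rewrite le_eqVlt; apply/orP; left; apply/eqP; ring.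
have hP11 : 0 <= P11.
  by have := hq 0 0 0 1; rewrite !cj0 cj1 => h; apply: (le_trans h); rewrite le_eqVlt; apply/orP; left; apply/eqP; ring.
move: (ge0_real hP00) (ge0_real hP10) (ge0_real hP01) (ge0_real hP11).
set p00 := complex.Re P00; set p10 := complex.Re P10.
set p01 := complex.Re P01; set p11 := complex.Re P11.
move=> e00' e10' e01' e11'.
have hd : d = conjc c.
  apply: (@herm_lemma p00 p11).
    have := hq 1 0 0 1; rewrite !cj0 cj1 -e00' -e11' => h; apply: (le_trans h).
    by rewrite le_eqVlt; apply/orP; left; apply/eqP; ring.
  have := hq 1 0 0 'i%C; rewrite !cj0 cj1 -e00' -e11' => h; apply: (le_trans h).
  rewrite le_eqVlt; apply/orP; left; apply/eqP.
  transitivity (P00 + (conjc 'i%C * 'i%C) * P11 + c * 'i%C + conjc 'i%C * d); first ring.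
  by rewrite cjii mul1r.
set n := Normc.normc c ^+ 2.
have hn : n%:C = c * conjc c by rewrite normc2.
have hs : forall t : R, 0 <= p00 + t * t * n * p11 - (t * n + t * n).
  move=> t; rewrite -ler0c.
  have := hq 1 0 0 (- (t%:C * conjc c)); rewrite !cj0 cj1 hd cjN cjM cjR cjK.
  move=> h; apply: (le_trans h); rewrite le_eqVlt; apply/orP; left; apply/eqP.
  have hn2 : (Normc.normc c)%:C * (Normc.normc c)%:C = c * conjc c.
    by rewrite -rcM; exact: normc2.
  rewrite e00' e11' !rcB !rcD !rcM hn2; ring.
  have hp0 : 0 <= p00 by rewrite -ler0c -e00'.
have hp1 : 0 <= p11 by rewrite -ler0c -e11'.
have hnle : n <= p00 * p11 := quad_lemma hp0 hp1 (sqr_ge0 _) hs.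
have tr0 : p00 + p10 = 1.
  have := htp (delta_mx i0 i0); rewrite /mxtrace !sum2 !delta_ij ?e00 ?e11 ?i01 ?i10 /=.
  rewrite -/P00 -/P10 e00' e10' -rcD addr0 => h.
  by apply: (@complexI R); rewrite h.
have tr1 : p01 + p11 = 1.
  have := htp (delta_mx i1 i1); rewrite /mxtrace !sum2 !delta_ij ?e00 ?e11 ?i01 ?i10 /=.
  rewrite -/P01 -/P11 e01' e11' -rcD add0r => h.
  by apply: (@complexI R); rewrite h.
exists p00, p01, p10, p11, c; split => //.
- by split; rewrite -ler0c; [rewrite -e00'|rewrite -e01'|rewrite -e10'|rewrite -e11'].
move=> X; rewrite {1}(mx_decomp X).
case: (linE hl) => _ hD hZ; rewrite !hD !hZ.
apply: mx2_eq; rewrite !addE !scaleE ?Em00 ?Em01 ?Em10 ?Em11 ?z1 ?z2 ?z3 ?z4 ?z5 ?z6 ?z7 ?z8 ?z9 ?z10 -?/P00 -?/P10 -?/P01 -?/P11 -?/c -?/d ?e00' ?e10' ?e01' ?e11' ?hd; ring.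
Qed.


Lemma qm00 (p : R) (c : C) : qmat p c i0 i0 = p%:C. Proof. by rewrite mxE. Qed.
Lemma qm01 (p : R) (c : C) : qmat p c i0 i1 = c. Proof. by rewrite mxE. Qed.
Lemma qm10 (p : R) (c : C) : qmat p c i1 i0 = conjc c. Proof. by rewrite mxE. Qed.
Lemma qm11 (p : R) (c : C) : qmat p c i1 i1 = (1 - p)%:C. Proof. by rewrite mxE. Qed.

Lemma Emap_qmat p00 p01 p10 p11 (c : C) (r s : R) (a b : C) :
  p00 + p10 = 1 -> p01 + p11 = 1 ->
  p00 * r + p01 * (1 - r) = s -> c * a = b ->
  Emap p00 p01 p10 p11 c (qmat r a) = qmat s b.
Proof.
move=> h1 h2 h3 h4.
apply: mx2_eq; rewrite ?Em00 ?Em01 ?Em10 ?Em11 ?qm00 ?qm01 ?qm10 ?qm11 -?rcM -?rcD.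
- by rewrite h3.
- by [].
- by rewrite -h4 cjM.
- congr (_%:C).
  have -> : p10 = 1 - p00 by lra.
  have -> : p11 = 1 - p01 by lra.
  rewrite -h3; ring.
Qed.

Lemma Emap_qmat_inv p00 p01 p10 p11 (c : C) (r s : R) (a b : C) :
  Emap p00 p01 p10 p11 c (qmat r a) = qmat s b ->
  p00 * r + p01 * (1 - r) = s /\ c * a = b.
Proof.
move=> h; split.
- have := congr1 (fun M : 'M[C]_2 => M i0 i0) h; rewrite /= Em00 !qm00 qm11 -!rcM -rcD.
  exact: (@complexI R).
- by have := congr1 (fun M : 'M[C]_2 => M i0 i1) h; rewrite /= Em01 !qm01.
Qed.

Lemma vec2_inj (x y : R) : vec2 x = vec2 y -> x = y.
Proof. by move=> /(congr1 (fun v : 'cV[R]_2 => v i0 0)); rewrite !mxE. Qed.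

Lemma cvR_eq (u w : 'cV[R]_2) : u i0 0 = w i0 0 -> u i1 0 = w i1 0 -> u = w.
Proof.
move=> h0 h1; apply/matrixP => i j; rewrite (ord1 j).
by case: (ord2 i) => ->.
Qed.

Definition Mmat (p00 p01 p10 p11 : R) : 'M[R]_2 :=
  \matrix_(i, j) (if i == i0 then (if j == i0 then p00 else p01) else (if j == i0 then p10 else p11)).

Lemma Mmat_vec p00 p01 p10 p11 (x : R) :
  Mmat p00 p01 p10 p11 *m vec2 x = \col_(i < 2) (if i == i0 then p00 * x + p01 * (1 - x) else p10 * x + p11 * (1 - x)).
Proof.
apply: cvR_eq; rewrite !mxE !sum2 !mxE /=; done.
Qed.


Lemma alg p00 p01 p10 p11 (r s g : R) : p00 + p10 = 1 -> p01 + p11 = 1 ->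
  p00 * r + p01 * (1 - r) = s -> p00 * g + p01 * (1 - g) = g -> r != g ->
  p00 * p11 = (s * (1 - g) - (1 - r) * g) * (r * (1 - g) - (1 - s) * g) / (r - g) ^+ 2.
Proof.
move=> h1 h2 h3 h4 hrg.
have rg : r - g != 0 by rewrite subr_eq0.
have e1 : p00 * (r - g) = s * (1 - g) - (1 - r) * g.
  have : s * (1 - g) - (1 - r) * g - p00 * (r - g) =
    (1 - g) * (s - (p00 * r + p01 * (1 - r))) - (1 - r) * (g - (p00 * g + p01 * (1 - g))) by ring.
  by rewrite h3 h4 !subrr !mulr0 subrr => /eqP; rewrite subr_eq0 => /eqP.
have e2 : p11 * (r - g) = r * (1 - g) - (1 - s) * g.
  have -> : p11 = 1 - p01 by lra.
  have : r * (1 - g) - (1 - s) * g - (1 - p01) * (r - g) =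
    g * (s - (p00 * r + p01 * (1 - r))) - r * (g - (p00 * g + p01 * (1 - g))) by ring.
  by rewrite h3 h4 !subrr !mulr0 subrr => /eqP; rewrite subr_eq0 => /eqP.
rewrite -e1 -e2; field; done.
Qed.

Lemma normc_ge0 (z : C) : 0 <= Normc.normc z.
Proof. by case: z => x y; rewrite /Normc.normc sqrtr_ge0. Qed.

Lemma normc_gt0 (z : C) : z != 0 -> 0 < Normc.normc z.
Proof.
move=> hz; rewrite lt_def normc_ge0 andbT; apply/negP => /eqP h.
by move: hz; rewrite (Normc.eq0_normc h) eqxx.
Qed.

Lemma ratio (c a b : C) : a != 0 -> c * a = b ->
  Normc.normc b ^+ 2 / Normc.normc a ^+ 2 = Normc.normc c ^+ 2.
Proof.
move=> ha <-; rewrite Normc.normcM exprMn mulfK //.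
by rewrite expf_eq0 /= gt_eqF // normc_gt0.
Qed.

End S.

Local Notation i0 := (@ord0 1).
Local Notation i1 := (@ord_max 1).

Theorem theorem5 (R : realType) (E0 E1 beta r s : R) (a b : R[i]) :
  E0 != E1 -> 0 < beta ->
  density (qmat r a) -> density (qmat s b) ->
  a != 0 -> gibbs_g beta E0 E1 != 2^-1 ->
  let g := gibbs_g beta E0 E1 in
  (vec2 r != vec2 g ->
     (GPC_convertible beta E0 E1 (qmat r a) (qmat s b) <->
      rel_maj (vec2 r) (vec2 s) (vec2 g) /\
      Normc.normc b ^+ 2 / Normc.normc a ^+ 2
        <= (s * (1 - g) - (1 - r) * g) * (r * (1 - g) - (1 - s) * g) / (r - g) ^+ 2))
  /\
  (vec2 r = vec2 g ->
     (GPC_convertible beta E0 E1 (qmat r a) (qmat s b) <->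
      vec2 s = vec2 g /\ Normc.normc b <= Normc.normc a)).
Proof.
move=> hE hbeta _ _ ha _ g.
have hgib : gibbs beta E0 E1 = qmat g 0 by [].
have back : forall p00 p01 p10 p11 (c : R[i]),
    [/\ 0 <= p00, 0 <= p01, 0 <= p10 & 0 <= p11] -> p00 + p10 = 1 -> p01 + p11 = 1 ->
    Normc.normc c ^+ 2 <= p00 * p11 -> p00 * g + p01 * (1 - g) = g ->
    p00 * r + p01 * (1 - r) = s -> c * a = b ->
    GPC_convertible beta E0 E1 (qmat r a) (qmat s b).
  move=> p00 p01 p10 p11 c [h0 h1 h2 h3] t0 t1 hn hgg hrs hc.
  exists (Emap p00 p01 p10 p11 c); split; last exact: Emap_qmat.
  split; first split.
  - exact: Emap_lin.
  - exact: Emap_tp.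
  - exact: Emap_cp.
  - by rewrite hgib; apply: Emap_qmat => //; rewrite mulr0.
  - exact: Emap_cov.
have fwd : GPC_convertible beta E0 E1 (qmat r a) (qmat s b) ->
   exists p00 p01 p10 p11 (c : R[i]),
    [/\ [/\ 0 <= p00, 0 <= p01, 0 <= p10 & 0 <= p11], p00 + p10 = 1, p01 + p11 = 1,
     Normc.normc c ^+ 2 <= p00 * p11 &
     [/\ p00 * g + p01 * (1 - g) = g, p00 * r + p01 * (1 - r) = s & c * a = b]].
  case=> E [[hch hgibE hcov] hEr].
  case: (gpc_forward hE hch hcov) => p00 [p01 [p10 [p11 [c [hp t0 t1 hn hEq]]]]].
  rewrite hEq in hEr; rewrite hEq hgib in hgibE.
  case: (Emap_qmat_inv hEr) => hrs hc.
  case: (Emap_qmat_inv hgibE) => hgg _.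
  by exists p00, p01, p10, p11, c; split.
split.
- move=> hrg.
  have rg : r != g by apply: contra hrg => /eqP ->.
  split.
  + case/fwd => p00 [p01 [p10 [p11 [c [[h0 h1 h2 h3] t0 t1 hn [hgg hrs hc]]]]]].
    split.
    * exists (Mmat p00 p01 p10 p11); split; [split|split].
      - move=> i j; rewrite mxE.
        by case: (ord2 i) => ->; case: (ord2 j) => ->.
      - by move=> j; rewrite sum2 !mxE; case: (ord2 j) => -> /=.
      - rewrite Mmat_vec; apply: cvR_eq; rewrite !mxE /=; first by [].
        have -> : p10 = 1 - p00 by lra.
        have -> : p11 = 1 - p01 by lra.
        rewrite -hrs; ring.
      - rewrite Mmat_vec; apply: cvR_eq; rewrite !mxE /=; first by [].
        have -> : p10 = 1 - p00 by lra.
        have -> : p11 = 1 - p01 by lra.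
        transitivity (1 - (p00 * g + p01 * (1 - g))); first ring.
        by rewrite hgg.
    * by rewrite (ratio ha hc) -(alg t0 t1 hrs hgg rg).
  + case=> [[M [[hM0 hM1] [hMr hMg]]] hineq].
    have s0 := hM1 i0; have s1 := hM1 i1.
    rewrite sum2 in s0; rewrite sum2 in s1.
    have er := congr1 (fun v : 'cV[R]_2 => v i0 0) hMr.
    have eg := congr1 (fun v : 'cV[R]_2 => v i0 0) hMg.
    move: er eg; rewrite /= !mxE !sum2 !mxE /= => er eg.
    have hc : (b / a) * a = b by rewrite divfK.
    apply: (back (M i0 i0) (M i0 i1) (M i1 i0) (M i1 i1) (b / a)) => //.
    by rewrite -(ratio ha hc) (alg s0 s1 er eg rg).
- move=> /vec2_inj erg; split.
  + case/fwd => p00 [p01 [p10 [p11 [c [[h0 h1 h2 h3] t0 t1 hn [hgg hrs hc]]]]]].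
    have esg : s = g by rewrite -hrs erg.
    split; first by rewrite esg.
    have hc1 : Normc.normc c <= 1.
      have hcc : Normc.normc c ^+ 2 <= 1.
        apply: (le_trans hn).
        have hp0 : p00 <= 1 by lra.
        have hp1 : p11 <= 1 by lra.
        by rewrite -[1](mulr1 1) ler_pM.
      have := normc_ge0 c; move: hcc; set x := Normc.normc c => hcc hx; nra.
    rewrite -hc Normc.normcM -[X in _ <= X]mul1r ler_wpM2r //.
    exact: normc_ge0.
  + case=> /vec2_inj esg hba.
    have hc : (b / a) * a = b by rewrite divfK.
    apply: (back 1 0 0 1 (b / a)) => //.
    * by rewrite addr0.
    * by rewrite add0r.
    * rewrite mulr1 -(ratio ha hc).
      rewrite ler_pdivrMr ?mul1r; last by rewrite exprn_gt0 // normc_gt0.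
      by rewrite ler_pXn2r // ?nnegrE ?normc_ge0.
    * by rewrite mul1r mul0r addr0.
    * by rewrite mul1r mul0r addr0 erg esg.
Qed.
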